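(* Let $\alpha,p,j\ge0$ be integers, and let $b_n=2n+\alpha+1$, $\lambda_n=n(n+\alpha)$. Then $$\sum_{\omega\in\mathrm{Mot}_{p,j,j}}\mathrm{wt}_{b,\lambda}(\omega)=\big|M^{(\alpha)}_{p,j}(p)\big|.$$
   Context: Motzkin paths: a Motzkin path is a sequence $(s_0,\dots,s_n)$ of points $s_i=(x_i,y_i)\in\mathbb{Z}^2$ with all $y_i\ge0$ such that each step $(s_i,s_{i+1})$ is an East step ($s_{i+1}=s_i+(1,0)$), a North-East step ($s_{i+1}=s_i+(1,1)$) or a South-East step ($s_{i+1}=s_i+(1,-1)$); the step has height $k$ if $y_i=k$. $\mathrm{Mot}_{n,k,l}$ is the set of Motzkin paths from $(0,k)$ to $(n,l)$. Given sequences $(b_n)_{n\ge0},(\lambda_n)_{n\ge0}$, an East step of height $k$ has weight $b_k$, a North-East step weight $1$, a South-East step of height $k$ weight $\lambda_k$, and $\mathrm{wt}_{b,\lambda}(\omega)$ is the product of the step weights of $\omega$. Bipartite matchings: for integers $n,j,\alpha\ge0$, let $T_-=\{-\alpha-j,\dots,-1\}$, $T_+=\{1,\dots,n\}$ (top row), $B_-=\{-\tilde j,\dots,-\tilde 1\}$, $B_+=\{\tilde1,\dots,\tilde n\}$ (bottom row; $\tilde m$ is a formal copy of $m$). A bipartite matching on $T_-\cup T_+\cup B_-\cup B_+$ is a set partition into singletons (isolated vertices) and two-element blocks $\{a,\tilde b\}$ with $a$ in the top row and $\tilde b$ in the bottom row (edges). $M^{(\alpha)}_{n,j}$ is the set of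 such matchings having no edge $\{a,\tilde b\}$ with $a\in T_-$ and $\tilde b\in B_-$, and $M^{(\alpha)}_{n,j}(l)$ is its subset of matchings with exactly $l$ edges. *)

(* Defs.v *)
From mathcomp Require Import all_boot.
Set Implicit Arguments. Unset Strict Implicit. Unset Printing Implicit Defensive.

(* A Motzkin path (s_0,...,s_n) from (0,k) is encoded by its sequence of
   n steps: 0 = East (1,0), 1 = North-East (1,1), 2 = South-East (1,-1). *)
Definition East : 'I_3 := @Ordinal 3 0 isT.
Definition NorthEast : 'I_3 := @Ordinal 3 1 isT.
Definition SouthEast : 'I_3 := @Ordinal 3 2 isT.

(* Height after a step taken at height k (only used when the step is valid). *)
Definition step_next (st : 'I_3) (k : nat) : nat :=
  if st == East then k else if st == NorthEast then k.+1 else k.-1.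

Fixpoint mot_valid (k l : nat) (s : seq 'I_3) : bool :=
  match s with
  | [::] => k == l
  | st :: s' =>
      (if st == SouthEast then 0 < k else true) && mot_valid (step_next st k) l s'
  end.

Definition Mot (n k l : nat) : {set n.-tuple 'I_3} :=
  [set w : n.-tuple 'I_3 | mot_valid k l w].

Fixpoint mot_wt (b lam : nat -> nat) (k : nat) (s : seq 'I_3) : nat :=
  match s with
  | [::] => 1
  | st :: s' =>
      (if st == East then b k else if st == NorthEast then 1 else lam k)
      * mot_wt b lam (step_next st k) s'
  end.

(* Top row T = T_- + T_+ with |T_-| = alpha + j, |T_+| = n;
   bottom row B = B_- + B_+ with |B_-| = j, |B_+| = n.
   (inl i : 'I_(alpha+j)) stands for the label -(i+1), (inr i : 'I_n) for i+1. *)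
Definition topV (alpha j n : nat) := ('I_(alpha + j) + 'I_n)%type.
Definition botV (j n : nat) := ('I_j + 'I_n)%type.

Definition is_neg (A B : Type) (x : A + B) : bool :=
  if x is inl _ then true else false.

(* A bipartite matching is determined by its set of edges {a, b~}; the other
   vertices are singletons. Edges must be pairwise vertex-disjoint. *)
Definition is_matching (alpha j n : nat) (M : {set topV alpha j n * botV j n}) : bool :=
  [forall e in M, forall e' in M,
      ((e.1 == e'.1) || (e.2 == e'.2)) ==> (e == e')].

Definition in_Malpha (alpha j n : nat) (M : {set topV alpha j n * botV j n}) : bool :=
  is_matching M && [forall e in M, ~~ (is_neg e.1 && is_neg e.2)].

Definition Malpha (alpha n j l : nat) : {set {set topV alpha j n * botV j n}} :=
  [set M | in_Malpha M && (#|M| == l)].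

(* Main.v *)
Require Import Defs.
From mathcomp Require Import all_boot zify.
From mathcomp Require Import ring.
Set Implicit Arguments. Unset Strict Implicit. Unset Printing Implicit Defensive.

Definition matchG (T B : finType) (M : {set T * B}) : bool :=
  [forall e in M, forall e' in M, ((e.1 == e'.1) || (e.2 == e'.2)) ==> (e == e')].
Definition okG (T B : finType) (P : T -> B -> bool) (St : {set T}) (Sb : {set B})
  (M : {set T * B}) : bool :=
  [forall e in M, [&& P e.1 e.2, e.1 \in St & e.2 \in Sb]].
Definition Vm (T B : finType) (P : T -> B -> bool) (St : {set T}) (Sb : {set B}) m :=
  [set M : {set T * B} | [&& matchG M, okG P St Sb M & #|M| == m]].

Lemma matchGP (T B : finType) (M : {set T * B}) :
  reflect (forall e e', e \in M -> e' \in M -> e.1 = e'.1 \/ e.2 = e'.2 -> e = e')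
          (matchG M).
Proof.
apply: (iffP forallP) => [H e e' He He' Hor | H e].
  have := H e; rewrite He /= => /forallP /(_ e'); rewrite He' /=.
  by case: Hor => ->; rewrite eqxx ?orbT /= => /eqP.
apply/implyP => He; apply/forallP => e'; apply/implyP => He'.
by apply/implyP => /orP [] /eqP Hx; apply/eqP; apply: H => //; [left|right].
Qed.

Lemma okGP (T B : finType) (P : T -> B -> bool) (St : {set T}) (Sb : {set B}) (M : {set T * B}) :
  reflect (forall e, e \in M -> [/\ P e.1 e.2, e.1 \in St & e.2 \in Sb]) (okG P St Sb M).
Proof.
apply: (iffP forallP) => [H e He | H e].
  by have := H e; rewrite He /= => /and3P.
by apply/implyP => /H [-> -> ->].
Qed.

Lemma VmP (T B : finType) (P : T -> B -> bool) (St : {set T}) (Sb : {set B}) m (M : {set T * B}) :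
  (M \in Vm P St Sb m) = [&& matchG M, okG P St Sb M & #|M| == m].
Proof. by rewrite inE. Qed.

Lemma card_snd (T B : finType) (M : {set T * B}) : matchG M -> #|snd @: M| = #|M|.
Proof.
move/matchGP => H; apply: card_in_imset => e e' He He' E.
by apply: H => //; right.
Qed.

Lemma card_fst (T B : finType) (M : {set T * B}) : matchG M -> #|fst @: M| = #|M|.
Proof.
move/matchGP => H; apply: card_in_imset => e e' He He' E.
by apply: H => //; left.
Qed.

Lemma card_dep (A C : finType) (X : {set A}) (Y : A -> {set C}) :
  #|[set pr : A * C | (pr.1 \in X) && (pr.2 \in Y pr.1)]| = \sum_(a in X) #|Y a|.
Proof.
rewrite -sum1_card.
have -> : \sum_(a in X) #|Y a| = \sum_(a in X) \sum_(c in Y a) 1.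
  by apply: eq_bigr => a _; rewrite sum1_card.
rewrite pair_big_dep; apply: eq_bigl => pr; by rewrite inE.
Qed.

Lemma sub_match (T B : finType) (M N : {set T * B}) : N \subset M -> matchG M -> matchG N.
Proof.
move=> /subsetP sNM /matchGP H; apply/matchGP => e e' He He'.
by apply: H; apply: sNM.
Qed.

Lemma okGE (T B : finType) (P : T -> B -> bool) (St : {set T}) (Sb : {set B}) (M : {set T * B}) e :
  okG P St Sb M -> e \in M -> [/\ P e.1 e.2, e.1 \in St & e.2 \in Sb].
Proof. by move/okGP => H /H. Qed.

Lemma Vm0 (T B : finType) (P : T -> B -> bool) (St : {set T}) (Sb : {set B}) :
  Vm P St Sb 0 = [set set0].
Proof.
apply/setP => M; rewrite VmP inE cards_eq0.
case: eqP => [->|] /=; rewrite ?andbT ?andbF //.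
apply/andP; split; [apply/matchGP | apply/okGP] => e; by rewrite inE.
Qed.

Lemma add_top (T B : finType) (P : T -> B -> bool) (St : {set T}) (Sb : {set B}) (t : T) m :
  t \notin St -> (forall y, y \in Sb -> P t y) ->
  #|Vm P (t |: St) Sb m.+1| = #|Vm P St Sb m.+1| + (#|Sb| - m) * #|Vm P St Sb m|.
Proof.
move=> tSt Pt.
set V := Vm P (t |: St) Sb m.+1.
rewrite -(cardsID [set M : {set T * B} | [exists y, (t, y) \in M]] V) addnC.
congr (_ + _).
  apply: eq_card => M; rewrite !inE.
  idtac.
  apply/idP/idP.
    case/andP => /existsPn Hn /and3P [mM /okGP oM ->]; rewrite mM andbT /=.
    apply/okGP => e He; have [Pe e1 e2] := oM e He; split => //.
    move: e1; rewrite !inE; case/orP => // /eqP E.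
    by have := Hn e.2; rewrite -E -surjective_pairing He.
  case/and3P => mM /okGP oM ->; rewrite mM andbT /=; apply/andP; split.
    apply/existsPn => y; apply/negP => Hy.
    by have [_ ] := oM _ Hy; rewrite /= (negbTE tSt).
  apply/okGP => e He; have [Pe e1 e2] := oM e He; split => //.
  by rewrite !inE e1 orbT.
pose D := [set pr : {set T * B} * B | (pr.1 \in Vm P St Sb m) &&
                (pr.2 \in Sb :\: snd @: pr.1)].
pose f (pr : {set T * B} * B) := (t, pr.2) |: pr.1.
have notin1 : forall (M : {set T * B}) y, okG P St Sb M -> (t, y) \notin M.
  move=> M y /okGP oM; apply/negP => /oM [_ /=]; by rewrite (negbTE tSt).
have -> : V :&: [set M : {set T * B} | [exists y, (t, y) \in M]] = f @: D.
  apply/setP => M; rewrite !inE; apply/idP/idP.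
    case/andP => /and3P [/matchGP mM /okGP oM /eqP cM] /existsP [y Hy].
    apply/imsetP; exists (M :\ (t, y), y); last by rewrite /f /= setD1K.
    rewrite inE /= VmP; apply/andP; split; last first.
      rewrite !inE; have [_ _ ->] := oM _ Hy; rewrite andbT.
      apply/imsetP => -[e]; rewrite !inE => /andP [ne He] E.
      by move/negP: ne; apply; apply/eqP; apply: mM => //; right.
    apply/and3P; split.
    - by apply: sub_match (subD1set _ _) _; apply/matchGP.
    - apply/okGP => e; rewrite !inE => /andP [ne He].
      have [Pe e1 e2] := oM e He; split => //.
      move: e1; rewrite !inE; case/orP => // /eqP E.
      by move/negP: ne; case; apply/eqP; apply: mM => //; left.
    - by move: cM; rewrite (cardsD1 (t, y)) Hy add1n => -[->].
  case/imsetP => -[M' y]; rewrite inE /= VmP => /andP [/and3P [mM' oM' /eqP cM']].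
  rewrite !inE => /andP [ny yS] ->; rewrite /f /=.
  apply/andP; split; last by apply/existsP; exists y; rewrite !inE eqxx.
  apply/and3P; split.
  - move/matchGP: mM' => mM'; apply/matchGP => e e'; rewrite !inE.
    have nt : forall e, e \in M' -> e.1 != t.
      move=> g Hg; have [_ g1 _] := okGE oM' Hg; apply/eqP => E.
      by move: g1; rewrite E (negbTE tSt).
    have ny' : forall e, e \in M' -> e.2 != y.
      move=> g Hg; apply/eqP => E; move/negP: ny; apply.
      by apply/imsetP; exists g.
    case/orP => [/eqP -> | He]; case/orP => [/eqP -> | He'] //.
    + by case=> /= E; [move: (nt _ He'); rewrite -E eqxx | move: (ny' _ He'); rewrite -E eqxx].
    + by case=> /= E; [move: (nt _ He); rewrite E eqxx | move: (ny' _ He); rewrite E eqxx].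
    + exact: mM'.
  - apply/okGP => e; rewrite !inE => /orP [/eqP -> | He] /=.
      by rewrite Pt // eqxx.
    have [Pe e1 e2] := okGE oM' He; split => //.
    by rewrite e1 orbT.
  - by rewrite cardsU1 notin1 // cM'.
rewrite card_in_imset; last first.
  move=> [M1 y1] [M2 y2]; rewrite !inE /= => /andP [/and3P [_ o1 _] _].
  move=> /andP [/and3P [_ o2 _] _]; rewrite /f /= => E.
  have ey : y1 = y2.
    have : (t, y1) \in (t, y2) |: M2 by rewrite -E setU11.
    rewrite !inE => /orP [/eqP [] // | H].
    by move: (notin1 _ y1 o2); rewrite H.
  subst y2; congr (_, _).
  by rewrite -(setU1K (notin1 _ y1 o1)) E setU1K // notin1.
rewrite /D (card_dep (Vm P St Sb m) (fun M => Sb :\: snd @: M)) mulnC -sum_nat_const; apply: eq_bigr => M.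
rewrite VmP => /and3P [mM oM /eqP cM].
rewrite cardsDS ?card_snd ?cM //.
apply/subsetP => y /imsetP [e He ->]; by have [] := okGE oM He.
Qed.

Lemma add_bot (T B : finType) (P : T -> B -> bool) (St : {set T}) (Sb : {set B}) (b : B) m :
  b \notin Sb -> (forall x, x \in St -> P x b) ->
  #|Vm P St (b |: Sb) m.+1| = #|Vm P St Sb m.+1| + (#|St| - m) * #|Vm P St Sb m|.
Proof.
move=> bSb Pb.
set V := Vm P St (b |: Sb) m.+1.
rewrite -(cardsID [set M : {set T * B} | [exists x, (x, b) \in M]] V) addnC.
congr (_ + _).
  apply: eq_card => M; rewrite !inE.
  apply/idP/idP.
    case/andP => /existsPn Hn /and3P [mM /okGP oM ->]; rewrite mM andbT /=.
    apply/okGP => e He; have [Pe e1 e2] := oM e He; split => //.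
    move: e2; rewrite !inE; case/orP => // /eqP E.
    by have := Hn e.1; rewrite -E -surjective_pairing He.
  case/and3P => mM /okGP oM ->; rewrite mM andbT /=; apply/andP; split.
    apply/existsPn => x; apply/negP => Hx.
    by have [_ _] := oM _ Hx; rewrite /= (negbTE bSb).
  apply/okGP => e He; have [Pe e1 e2] := oM e He; split => //.
  by rewrite !inE e2 orbT.
pose D := [set pr : {set T * B} * T | (pr.1 \in Vm P St Sb m) &&
                (pr.2 \in St :\: fst @: pr.1)].
pose f (pr : {set T * B} * T) := (pr.2, b) |: pr.1.
have notin1 : forall (M : {set T * B}) x, okG P St Sb M -> (x, b) \notin M.
  move=> M x /okGP oM; apply/negP => /oM [_ _ /=]; by rewrite (negbTE bSb).
have -> : V :&: [set M : {set T * B} | [exists x, (x, b) \in M]] = f @: D.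
  apply/setP => M; rewrite !inE; apply/idP/idP.
    case/andP => /and3P [/matchGP mM /okGP oM /eqP cM] /existsP [x Hx].
    apply/imsetP; exists (M :\ (x, b), x); last by rewrite /f /= setD1K.
    rewrite inE /= VmP; apply/andP; split; last first.
      rewrite !inE; have [_ -> _] := oM _ Hx; rewrite andbT.
      apply/imsetP => -[e]; rewrite !inE => /andP [ne He] E.
      by move/negP: ne; apply; apply/eqP; apply: mM => //; left.
    apply/and3P; split.
    - by apply: sub_match (subD1set _ _) _; apply/matchGP.
    - apply/okGP => e; rewrite !inE => /andP [ne He].
      have [Pe e1 e2] := oM e He; split => //.
      move: e2; rewrite !inE; case/orP => // /eqP E.
      by move/negP: ne; case; apply/eqP; apply: mM => //; right.
    - by move: cM; rewrite (cardsD1 (x, b)) Hx add1n => -[->].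
  case/imsetP => -[M' x]; rewrite inE /= VmP => /andP [/and3P [mM' oM' /eqP cM']].
  rewrite !inE => /andP [nx xS] ->; rewrite /f /=.
  apply/andP; split; last by apply/existsP; exists x; rewrite !inE eqxx.
  apply/and3P; split.
  - move/matchGP: mM' => mM'; apply/matchGP => e e'; rewrite !inE.
    have nt : forall e, e \in M' -> e.2 != b.
      move=> g Hg; have [_ _ g2] := okGE oM' Hg; apply/eqP => E.
      by move: g2; rewrite E (negbTE bSb).
    have nx' : forall e, e \in M' -> e.1 != x.
      move=> g Hg; apply/eqP => E; move/negP: nx; apply.
      by apply/imsetP; exists g.
    case/orP => [/eqP -> | He]; case/orP => [/eqP -> | He'] //.
    + by case=> /= E; [move: (nx' _ He'); rewrite -E eqxx | move: (nt _ He'); rewrite -E eqxx].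
    + by case=> /= E; [move: (nx' _ He); rewrite E eqxx | move: (nt _ He); rewrite E eqxx].
    + exact: mM'.
  - apply/okGP => e; rewrite !inE => /orP [/eqP -> | He] /=.
      by rewrite Pb // eqxx orTb.
    have [Pe e1 e2] := okGE oM' He; split => //.
    by rewrite e2 orbT.
  - by rewrite cardsU1 notin1 // cM'.
rewrite card_in_imset; last first.
  move=> [M1 x1] [M2 x2]; rewrite !inE /= => /andP [/and3P [_ o1 _] _].
  move=> /andP [/and3P [_ o2 _] _]; rewrite /f /= => E.
  have ex : x1 = x2.
    have : (x1, b) \in (x2, b) |: M2 by rewrite -E setU11.
    rewrite !inE => /orP [/eqP [] // | H].
    by move: (notin1 _ x1 o2); rewrite H.
  subst x2; congr (_, _).
  by rewrite -(setU1K (notin1 _ x1 o1)) E setU1K // notin1.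
rewrite /D (card_dep (Vm P St Sb m) (fun M => St :\: fst @: M)) mulnC -sum_nat_const; apply: eq_bigr => M.
rewrite VmP => /and3P [mM oM /eqP cM].
rewrite cardsDS ?card_fst ?cM //.
apply/subsetP => y /imsetP [e He ->]; by have [] := okGE oM He.
Qed.

Fixpoint F (a q k l : nat) : nat :=
  match q with
  | 0 => if k == l then 1 else 0
  | q'.+1 => F a q' k.+1 l + (2 * k + a + 1) * F a q' k l
             + (if k is k'.+1 then k * (k + a) * F a q' k' l else 0)
  end.

Lemma F_S a q k l : F a q.+1 k l = F a q k.+1 l + (2 * k + a + 1) * F a q k l
             + (if k is k'.+1 then k * (k + a) * F a q k' l else 0).
Proof. by []. Qed.

Lemma F_last a q k l : F a q.+1 k l =
  (if l is l'.+1 then F a q k l' else 0) + (2 * l + a + 1) * F a q k l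
  + l.+1 * (l.+1 + a) * F a q k l.+1.
Proof.
elim: q k l => [|q IH] k l.
  rewrite /=; case: k => [|k]; case: l => [|l]; rewrite /= ?eqSS;
  repeat (case: eqP => ?); try subst; try (exfalso; lia); try ring.
rewrite [LHS]F_S; case: k => [|k].
  rewrite [in X in X = _](IH 1 l) [in X in X = _](IH 0 l).
  case: l => [|l]; rewrite !F_S; ring.
rewrite [in X in X = _](IH k.+2 l) [in X in X = _](IH k.+1 l) [in X in X = _](IH k l).
case: l => [|l]; rewrite !F_S; ring.
Qed.

Lemma F_zero a q k l : k + q < l -> F a q k l = 0.
Proof.
elim: q k => [|q IH] k H /=.
  by case: eqP => // E; move: H; rewrite E addn0 ltnn.
case: k H => [|k] H; rewrite !IH //; lia.
Qed.

Lemma big_tuple_cons (T : finType) n (G : n.+1.-tuple T -> nat) :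
  \sum_(w : n.+1.-tuple T) G w = \sum_(x : T) \sum_(t : n.-tuple T) G [tuple of x :: t].
Proof.
rewrite pair_big /=.
rewrite (reindex (fun p : T * n.-tuple T => [tuple of p.1 :: p.2])) //=.
exists (fun w : n.+1.-tuple T => (thead w, [tuple of behead w])).
  by move=> [x t] _ /=; congr (_, _); apply: val_inj.
by move=> w _; rewrite [RHS]tuple_eta.
Qed.

Lemma path_sum a q k l :
  \sum_(w in Mot q k l) mot_wt (fun n => 2 * n + a + 1) (fun n => n * (n + a)) k w
  = F a q k l.
Proof.
elim: q k => [|q IH] k.
  rewrite (eq_bigr (fun _ => 1)); last by move=> w _; rewrite tuple0.
  rewrite sum1_card /=.
  case: eqP => E.
    subst; rewrite (eq_card (B := predT)) ?card_tuple //.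
    by move=> w; rewrite inE tuple0 /= eqxx.
  apply/eqP; rewrite cards_eq0; apply/eqP/setP => w; rewrite inE tuple0 /= inE.
  by apply/eqP.
rewrite big_mkcond big_tuple_cons /=.
under eq_bigr => x _ do under eq_bigr => t _ do rewrite inE /=.
rewrite !big_ord_recl big_ord0 /=.
have S c k' : \sum_(t : q.-tuple 'I_3) (if mot_valid k' l t then
     c * mot_wt (fun n => 2 * n + a + 1) (fun n => n * (n + a)) k' t else 0)
     = c * F a q k' l.
  by rewrite -IH big_distrr [RHS]big_mkcond /=; apply: eq_bigr => t _; rewrite inE; case: ifP.
rewrite /step_next /=.
rewrite (S _ k) (S _ k.+1) addn0.
case: k => [|k] /=.
  rewrite big1 //; lia.
rewrite (S _ k); lia.
Qed.

Definition Pn (A1 A2 C1 C2 : Type) (x : A1 + A2) (y : C1 + C2) : bool :=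
  ~~ (is_neg x && is_neg y).

Definition SQ (A : finType) p q : {set A + 'I_p} :=
  [set x : A + 'I_p | if x is inr i then i < q else true].

Lemma SQ_S (A : finType) p q (hq : q < p) :
  SQ A p q.+1 = inr (Ordinal hq) |: SQ A p q.
Proof.
apply/setP => -[x|i]; rewrite !inE //=.
have -> : (inr i == inr (Ordinal hq) :> A + 'I_p) = (i == Ordinal hq) by [].
by rewrite -val_eqE /= ltnS leq_eqVlt.
Qed.

Lemma SQ_notin (A : finType) p q (hq : q < p) : inr (Ordinal hq) \notin SQ A p q.
Proof. by rewrite inE /= ltnn. Qed.

Lemma card_SQ (A : finType) p q : q <= p -> #|SQ A p q| = #|A| + q.
Proof.
elim: q => [|q IH] hq.
  have -> : SQ A p 0 = inl @: [set: A].
    apply/setP => -[x|i]; rewrite !inE /=.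
      by apply/esym/imsetP; exists x; rewrite ?inE.
    by apply/esym/imsetP => -[y _].
  by rewrite card_imset ?cardsT ?addn0 //; apply: inl_inj.
rewrite (SQ_S A hq) cardsU1 SQ_notin IH 1?addnC //; lia.
Qed.

Lemma card_le (T B : finType) (P : T -> B -> bool) (St : {set T}) (Sb : {set B}) M :
  matchG M -> okG P St Sb M -> #|M| <= #|Sb|.
Proof.
move=> mM oM; rewrite -card_snd //; apply: subset_leq_card.
apply/subsetP => y /imsetP [e He ->]; by have [] := okGE oM He.
Qed.

Lemma Vm_big (T B : finType) (P : T -> B -> bool) (St : {set T}) (Sb : {set B}) m :
  #|Sb| < m -> #|Vm P St Sb m| = 0.
Proof.
move=> H; apply/eqP; rewrite cards_eq0; apply/eqP/setP => M; rewrite !inE.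
apply/negP => /and3P [mM oM /eqP cM].
by move: (card_le mM oM); rewrite cM leqNgt H.
Qed.

Lemma Vm_1 (T B : finType) (P : T -> B -> bool) (St : {set T}) (Sb : {set B}) :
  #|Vm P St Sb 0| = 1.
Proof. by rewrite Vm0 cards1. Qed.


Lemma N0 (a j p : nat) m :
  #|Vm (@Pn _ _ _ _) (SQ 'I_(a + j) p 0) (SQ 'I_j p 0) m| = (m == 0).
Proof.
case: m => [|m]; first by rewrite Vm_1.
apply/eqP; rewrite cards_eq0; apply/eqP/setP => M; rewrite !inE.
apply/negP => /and3P [mM oM /eqP cM].
case: (set_0Vmem M) => [E | [e He]]; first by move: cM; rewrite E cards0.
have [] := okGE oM He.
by case: e He => -[x|x] [y|y] //= _; rewrite !inE.
Qed.

Definition NN a j p q1 q2 m :=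
  #|Vm (@Pn _ _ _ _) (SQ 'I_(a + j) p q1) (SQ 'I_j p q2) m|.

Lemma Hstep a j p q (hq : q < p) m :
  NN a j p q.+1 q m.+1 = NN a j p q q m.+1 + (j + q - m) * NN a j p q q m.
Proof.
rewrite /NN (SQ_S 'I_(a + j) hq) add_top ?SQ_notin ?card_SQ ?card_ord //.
exact: ltnW.
Qed.

Lemma Nstep a j p q (hq : q < p) m :
  NN a j p q.+1 q.+1 m.+1 = NN a j p q.+1 q m.+1 + (a + j + q.+1 - m) * NN a j p q.+1 q m.
Proof.
rewrite /NN [SQ 'I_j p q.+1](SQ_S 'I_j hq) add_bot ?SQ_notin ?card_SQ ?card_ord //.
by move=> x _; rewrite /Pn andbF.
Qed.

Lemma NN0 a j p q1 q2 : NN a j p q1 q2 0 = 1.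
Proof. exact: Vm_1. Qed.

Lemma NNbig a j p q m : q <= p -> j + q < m -> NN a j p q q m = 0.
Proof. by move=> hq H; apply: Vm_big; rewrite card_SQ // card_ord. Qed.

Lemma claim a j p q : q <= p -> forall m l, m + l = j + q -> NN a j p q q m = F a q j l.
Proof.
elim: q => [|q IH] hq m l E.
  rewrite /NN N0 /=; case: m E => [|m] E /=.
    by rewrite add0n addn0 in E; subst; rewrite eqxx.
  by case: eqP => // ?; lia.
have hq' : q < p by [].
have IH' := IH (ltnW hq').
case: m E => [|m] E.
  rewrite add0n in E; subst l.
  have -> : j + q.+1 = (j + q).+1 by lia.
  rewrite NN0 F_last.
  rewrite (@F_zero a q j (j + q).+1); last by lia.
  rewrite (@F_zero a q j (j + q).+2); last by lia.
  by rewrite -(IH' 0) ?NN0 //; lia.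
rewrite Nstep // Hstep //.
case: m E => [|m] E.
  rewrite !NN0 !muln1.
  have El : l = j + q by lia.
  subst l; rewrite F_last.
  rewrite (@F_zero a q j (j + q).+1); last by lia.
  rewrite -(IH' 0 (j + q)) // NN0.
  destruct (j + q) as [|r] eqn:Ejq.
    rewrite NNbig; [|exact: ltnW hq'|lia].
    rewrite muln0 addn0; lia.
  rewrite -(IH' 1 r); last by lia.
  rewrite muln0 addn0 muln1 subn0; lia.
rewrite Hstep //.
have Ejq : j + q = m.+1 + l by lia.
rewrite F_last (IH' m.+1 l) // (IH' m l.+1); last by lia.
have -> : j + q - m.+1 = l by lia.
have -> : j + q - m = l.+1 by lia.
have -> : a + j + q.+1 - m.+1 = a + l.+1 by lia.
clear E; case: l Ejq => [|l] Ejq.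
  rewrite NNbig; [|exact: ltnW hq'|lia]; ring.
rewrite (IH' m.+2 l); last by lia.
ring.
Qed.

Lemma Malpha_eq (alpha p j : nat) :
  #|Malpha alpha p j p| = NN alpha j p p p p.
Proof.
rewrite /NN; apply: eq_card => M; rewrite !inE /in_Malpha.
have -> : is_matching M = matchG M by [].
case: (matchG M) => //=; congr (_ && _).
apply/forallP/okGP => [H e He | H e].
  have := H e; rewrite He /= => He'; split => //; rewrite inE.
    by case: e.1.
  by case: e.2.
by apply/implyP => /H [].
Qed.

Theorem lemma2p2 (alpha p j : nat) :
  \sum_(w in Mot p j j)
     mot_wt (fun n => 2 * n + alpha + 1) (fun n => n * (n + alpha)) j w
  = #|Malpha alpha p j p|.
Proof.
by rewrite path_sum Malpha_eq (@claim alpha j p p (leqnn p) p j) // addnC.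
Qed.
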